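(* Suppose Assumptions 1–6 hold. Then $$\inf_{\boldsymbol\lambda\in\Theta_{\alpha,T}}\{(\boldsymbol\lambda-Z_{T\alpha})'\mathcal I_\alpha(\boldsymbol\lambda-Z_{T\alpha})\}=\inf_{\boldsymbol\lambda\in\Lambda}\{(\boldsymbol\lambda-Z_{T\alpha})'\mathcal I_\alpha(\boldsymbol\lambda-Z_{T\alpha})\}+o_{p\alpha}(1).$$
   Context: Setting. Fix an integer $p\ge1$. $\{y_t\}$ is a real-valued time series observed for $t=-p+1,\dots,T$; write $\boldsymbol y_{t-1}=(y_{t-1},\dots,y_{t-p})$ and $\mathcal F_t=\sigma(y_s,\ s\le t)$. For $\tilde\phi=(\tilde\phi_0,\tilde\phi_1,\dots,\tilde\phi_p,\tilde\sigma^2)\in\mathbb R^{p+1}\times(0,\infty)$ let $f_t(\tilde\phi)=\tilde\sigma^{-1}\mathfrak N\big((y_t-\tilde\phi_0-\sum_{i=1}^p\tilde\phi_iy_{t-i})/\tilde\sigma\big)$ with $\mathfrak N(u)=(2\pi)^{-1/2}e^{-u^2/2}$; $\nabla f_t$ denotes the gradient with respect to $\tilde\phi$. Integers $q_1\ge0$, $q_2\ge1$ with $q_1+q_2=p+2$ and a known $(p+2)\times(p+2)$ permutation matrix $P$ are fixed; for $\beta\in\mathbb R^{q_1},\phi\in\mathbb R^{q_2}$ write $f_t(\beta,\phi)=f_t(P^{-1}(\beta,\phi))$. Given a mixing weight $\alpha_t(\alpha,\beta,\phi,\varphi)$ depending on an additional parameter $\alpha$, the two-regime mixture autoregressive log-likelihood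 is $L_T(\alpha,\beta,\phi,\varphi)=\sum_{t=1}^T\log[\alpha_tf_t(\beta,\phi)+(1-\alpha_t)f_t(\beta,\varphi)]$; the null (linear AR) log-likelihood is $L^0_T(\tilde\phi)=\sum_{t=1}^T\log f_t(\tilde\phi)$. Let $\hat{\tilde\phi}_T$ satisfy $L^0_T(\hat{\tilde\phi}_T)=\sup_{\tilde\phi\in\tilde\Phi}L^0_T(\tilde\phi)+o_p(1)$ and $\hat{\tilde\phi}_T=\tilde\phi^*+o_p(1)$. Define $LR_T(\alpha)=2[\sup_{(\beta,\phi,\varphi)\in B\times\Phi\times\Phi}L_T(\alpha,\beta,\phi,\varphi)-\sup_{\tilde\phi\in\tilde\Phi}L^0_T(\tilde\phi)]$ and $LR_T=\sup_{\alpha\in A}LR_T(\alpha)$. Notation. For random quantities $X_{T\alpha}$ indexed by $\alpha\in A$, $X_{T\alpha}=o_{p\alpha}(1)$ (resp. $O_{p\alpha}(1)$) means $\sup_{\alpha\in A}\|X_{T\alpha}\|=o_p(1)$ (resp. $O_p(1)$). $\mathcal B(A,\mathbb R^k)$ (resp. $\mathcal C(A,\mathbb R^k)$) is the space of bounded (resp. continuous) $\mathbb R^k$-valued functions on $A$ with the uniform metric; $\Rightarrow$ denotes weak convergence of processes in such spaces. A set $\Lambda\subset\mathbb R^r$ is a cone if $\lambda\in\Lambda$ implies $a\lambda\in\Lambda$ for all real $a>0$. A collection $\{\Gamma_\alpha,\alpha\in A\}$ of subsets of $\mathbb R^r$ is locally uniformly equal to $\Lambda\subset\mathbb R^r$ if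 there is $\delta>0$ with $\Gamma_\alpha\cap(-\delta,\delta)^r=\Lambda\cap(-\delta,\delta)^r$ for all $\alpha\in A$. $\lambda_{\min},\lambda_{\max}$ denote smallest/largest eigenvalues. Assumption 1. (i) $y_t=\tilde\phi^*_0+\sum_{i=1}^p\tilde\phi^*_iy_{t-i}+\tilde\sigma^*\varepsilon_t$ is a stationary linear Gaussian AR($p$) process, $\varepsilon_t$ i.i.d. $N(0,1)$ with $\varepsilon_t$ independent of $\{y_{t-j},j>0\}$, where $\tilde\phi^*$ is an interior point of a compact set $\tilde\Phi\subset\{\tilde\phi:\tilde\phi_0\in\mathbb R,\ 1-\sum_{i=1}^p\tilde\phi_iz^i\ne0\text{ for }|z|\le1,\ \tilde\sigma^2\in(0,\infty)\}$. (ii) The parameter space of $(\alpha,\beta,\phi,\varphi)$ is $A\times B\times\Phi\times\Phi$ with $A\subset\mathbb R^a$ compact and $B\subset\mathbb R^{q_1}$, $\Phi\subset\mathbb R^{q_2}$ compact such that $(\beta,\phi)\in B\times\Phi$ iff $P^{-1}(\beta,\phi)\in\tilde\Phi$; write $(\beta^*,\phi^* )=P\tilde\phi^*$. (iii) For all $t$ and all parameter values, $\alpha_t(\alpha,\beta,\phi,\varphi)$ is $\sigma(\boldsymbol y_{t-1})$-measurable and lies in $(0,1)$. Assumption 2. For each $\alpha\in A$, estimators $(\hat\beta_{T\alpha},\hat\phi_{T\alpha},\hat\varphi_{T\alpha})\in B\times\Phi\times\Phi$ satisfy (i) $L_T(\alpha,\hat\beta_{T\alpha},\hat\phi_{T\alpha},\hat\varphi_{T\alpha})=\sup_{(\beta,\phi,\varphi)\in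 B\times\Phi\times\Phi}L_T(\alpha,\beta,\phi,\varphi)+o_{p\alpha}(1)$ and (ii) $(\hat\beta_{T\alpha},\hat\phi_{T\alpha},\hat\varphi_{T\alpha})=(\beta^*,\phi^*,\phi^* )+o_{p\alpha}(1)$. Assumption 3. (i) For every $\alpha\in A$ the map $(\pi,\varpi)=\boldsymbol\pi_\alpha(\phi,\varphi)$ from $\Phi\times\Phi$ onto $\Pi_\alpha:=\boldsymbol\pi_\alpha(\Phi\times\Phi)\subset\mathbb R^{2q_2}$ is one-to-one with $\boldsymbol\pi_\alpha$ and $\boldsymbol\pi_\alpha^{-1}$ continuous. (ii) $\boldsymbol\pi_\alpha(\{(\phi,\phi):\phi\in\Phi\})=\Phi\times\{0\}$ and $\boldsymbol\pi_\alpha(\phi^*,\phi^* )=(\pi^*,0)$ with $\pi^*:=\phi^*$. (iii) $(\hat\beta_{T\alpha},\hat\pi_{T\alpha},\hat\varpi_{T\alpha})=(\beta^*,\pi^*,0)+o_{p\alpha}(1)$, where $(\hat\pi_{T\alpha},\hat\varpi_{T\alpha})=\boldsymbol\pi_\alpha(\hat\phi_{T\alpha},\hat\varphi_{T\alpha})$. The reparameterized log-likelihood is $L^\pi_T(\alpha,\beta,\pi,\varpi)=L_T(\alpha,\beta,\boldsymbol\pi_\alpha^{-1}(\pi,\varpi))$. Assumption 4. For some integer $k\ge2$ and every $\alpha\in A$, $\alpha_t(\alpha,\cdot)$ and $\boldsymbol\pi^{-1}_\alpha$ are $k$ times continuously differentiable on the interiors of $B\times\Phi\times\Phi$ and $\Pi_\alpha$,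 respectively. Assumption 5. For each $\alpha\in A$ and $(\beta,\pi,\varpi)\in B\times\Pi_\alpha$, with $\boldsymbol\theta=\boldsymbol\theta(\alpha,\beta,\pi,\varpi)$, $L^\pi_T(\alpha,\beta,\pi,\varpi)-L^\pi_T(\alpha,\beta^*,\pi^*,0)=(T^{-1/2}S_{T\alpha})'[T^{1/2}\boldsymbol\theta]-\tfrac12[T^{1/2}\boldsymbol\theta]'\mathcal I_\alpha[T^{1/2}\boldsymbol\theta]+R_T(\alpha,\beta,\pi,\varpi)$, where: (i) for each $\alpha$, $\boldsymbol\theta(\alpha,\cdot)$ maps $B\times\Pi_\alpha$ onto $\Theta_\alpha\subset\mathbb R^r$, with (a) $\boldsymbol\theta(\alpha,\beta^*,\pi^*,0)=0$ and (b) for every $\epsilon>0$ there is $\delta_\epsilon>0$ with $\inf_{\alpha\in A}\inf_{(\beta,\pi,\varpi)\in B\times\Pi_\alpha:\|(\beta,\pi,\varpi)-(\beta^*,\pi^*,0)\|\ge\epsilon}\|\boldsymbol\theta(\alpha,\beta,\pi,\varpi)\|\ge\delta_\epsilon$; (ii) $S_{T\alpha}=\sum_{t=1}^Ts_{t\alpha}$ is an $\mathbb R^r$-valued $\mathcal F_T$-measurable process indexed by $\alpha\in A$, not depending on $(\beta,\pi,\varpi)$, with sample paths continuous in $\alpha$, and $T^{-1/2}S_{T\bullet}\Rightarrow S_\bullet$ for a mean-zero $\mathbb R^r$-valued Gaussian process $\{S_\alpha:\alpha\in A\}$ with a.s. continuous sample paths and $E[S_\alpha S_\alpha']=E[s_{t\alpha}s_{t\alpha}']=\mathcal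 I_\alpha$; (iii) $\mathcal I_\alpha$ is a nonrandom symmetric $r\times r$ matrix not depending on $(\beta,\pi,\varpi)$, continuous in $\alpha$, with $0<\inf_{\alpha\in A}\lambda_{\min}(\mathcal I_\alpha)$ and $\sup_{\alpha\in A}\lambda_{\max}(\mathcal I_\alpha)<\infty$; (iv) for every nonrandom sequence of positive scalars $\gamma_T\to0$, $\sup_{(\beta,\pi,\varpi)\in B\times\Pi_\alpha:\|(\beta,\pi,\varpi)-(\beta^*,\pi^*,0)\|\le\gamma_T}|R_T(\alpha,\beta,\pi,\varpi)|/(1+\|T^{1/2}\boldsymbol\theta(\alpha,\beta,\pi,\varpi)\|)^2=o_{p\alpha}(1)$. Assumption 6. $\{\Theta_\alpha,\alpha\in A\}$ is locally uniformly equal to a cone $\Lambda\subset\mathbb R^r$. Assumption 7. With $q_\theta=q_1+q_2$ and $q_\vartheta=r-q_\theta$, $\Lambda=\mathbb R^{q_\theta}\times\Lambda_\vartheta$ for a cone $\Lambda_\vartheta\subset\mathbb R^{q_\vartheta}$. Assumption 8. Partitioning $S_{T\alpha}=(S_{T\theta\alpha},S_{T\vartheta\alpha})$ with $S_{T\theta\alpha}$ of dimension $q_\theta$, $S_{T\theta\alpha}=S^0_T:=\sum_{t=1}^T\nabla f_t(\tilde\phi^* )/f_t(\tilde\phi^* )$ for all $\alpha$. Let $\mathcal I^0=E[(\nabla f_t(\tilde\phi^* )/f_t(\tilde\phi^* ))(\nabla f_t(\tilde\phi^* )/f_t(\tilde\phi^* ))']$. Further notation. $Z_{T\alpha}=\mathcal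 I_\alpha^{-1}T^{-1/2}S_{T\alpha}$, $Z_\alpha=\mathcal I_\alpha^{-1}S_\alpha$. Partition $S_\alpha=(S_{\theta\alpha},S_{\vartheta\alpha})$, $Z_\alpha=(Z_{\theta\alpha},Z_{\vartheta\alpha})$, $\boldsymbol\lambda=(\boldsymbol\lambda_\theta,\boldsymbol\lambda_\vartheta)$ and $\mathcal I_\alpha$ into blocks $\mathcal I_{\theta\theta\alpha},\mathcal I_{\theta\vartheta\alpha},\mathcal I_{\vartheta\theta\alpha},\mathcal I_{\vartheta\vartheta\alpha}$ conformably with dimensions $q_\theta,q_\vartheta$; $(\mathcal I_\alpha^{-1})_{\vartheta\vartheta}$ is the bottom-right $q_\vartheta\times q_\vartheta$ block of $\mathcal I_\alpha^{-1}$. $\Theta_{\alpha,T}=\{T^{1/2}\boldsymbol\theta:\boldsymbol\theta\in\Theta_\alpha\}$. *)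

(* Defs.v *)
From HB Require Import structures.
From mathcomp Require Import all_boot all_order all_algebra.
From mathcomp Require Import all_classical all_reals all_analysis.
Set Implicit Arguments. Unset Strict Implicit. Unset Printing Implicit Defensive.
Import Order.TTheory GRing.Theory Num.Theory.
Import numFieldNormedType.Exports.
Local Open Scope classical_set_scope.
Local Open Scope ring_scope.

Section Defs.
Context {R : realType}.

Definition qform (r : nat) (M : 'M[R]_r) (v : 'cV[R]_r) : R :=
  (v^T *m M *m v) ord0 ord0.

Definition is_cone (r : nat) (L : set 'cV[R]_r) : Prop :=
  forall l a, L l -> 0 < a -> L (a *: l).

Definition cube (r : nat) (delta : R) : set 'cV[R]_r :=
  [set v | forall i, `|v i ord0| < delta].

Definition loc_unif_equal (a r : nat) (A : set 'rV[R]_a)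
  (G : 'rV[R]_a -> set 'cV[R]_r) (L : set 'cV[R]_r) : Prop :=
  exists delta : R, 0 < delta /\
    forall alpha, A alpha -> G alpha `&` @cube r delta = L `&` @cube r delta.

(* outer probability of the (possibly non-measurable) event E is <= e *)
Definition outer_prob_le d (Om : measurableType d) (P : probability Om R)
  (E : set Om) (e : R) : Prop :=
  exists F, measurable F /\ E `<=` F /\ (P F <= e%:E)%E.

(* X_{T alpha} = o_{p alpha}(1): sup_{alpha in A} |X_{T alpha}| -> 0 in (outer) probability *)
Definition o_p_unif d (Om : measurableType d) (P : probability Om R) (a : nat)
  (A : set 'rV[R]_a) (X : nat -> Om -> 'rV[R]_a -> R) : Prop :=
  forall eps eta : R, 0 < eps -> 0 < eta ->
    \forall T \near \oo,
      outer_prob_le P [set w | exists alpha, A alpha /\ eps < `|X T w alpha|] eta.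

(* Y_{T alpha} = O_{p alpha}(1): sup_{alpha in A} ||Y_{T alpha}|| is bounded in (outer) probability *)
Definition O_p_unif d (Om : measurableType d) (P : probability Om R) (a r : nat)
  (A : set 'rV[R]_a) (Y : nat -> Om -> 'rV[R]_a -> 'cV[R]_r) : Prop :=
  forall eta : R, 0 < eta -> exists M : R,
    \forall T \near \oo,
      outer_prob_le P [set w | exists alpha, A alpha /\ M < `|Y T w alpha|] eta.

Definition scaled_score d (Om : measurableType d) (a r : nat)
  (S : nat -> Om -> 'rV[R]_a -> 'cV[R]_r) (T : nat) (w : Om) (alpha : 'rV[R]_a)
  : 'cV[R]_r := (Num.sqrt (T%:R : R))^-1 *: S T w alpha.

Definition Zstat d (Om : measurableType d) (a r : nat)
  (S : nat -> Om -> 'rV[R]_a -> 'cV[R]_r) (I : 'rV[R]_a -> 'M[R]_r)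
  (T : nat) (w : Om) (alpha : 'rV[R]_a) : 'cV[R]_r :=
  invmx (I alpha) *m scaled_score S T w alpha.

Definition scaled_set (r : nat) (Th : set 'cV[R]_r) (T : nat) : set 'cV[R]_r :=
  [set Num.sqrt (T%:R : R) *: th | th in Th].

Definition inf_qform (r : nat) (M : 'M[R]_r) (z : 'cV[R]_r) (L : set 'cV[R]_r) : R :=
  inf [set qform M (l - z) | l in L].

End Defs.

(* Main.v *)
Require Import Defs.
From HB Require Import structures.
From mathcomp Require Import all_boot all_order all_algebra.
From mathcomp Require Import all_classical all_reals all_analysis.
From mathcomp Require Import ring lra.
Set Implicit Arguments. Unset Strict Implicit. Unset Printing Implicit Defensive.
Import Order.TTheory GRing.Theory Num.Theory.
Import numFieldNormedType.Exports.
Local Open Scope classical_set_scope.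
Local Open Scope ring_scope.

Lemma inf_restrict {R : realType} {T : Type} (E C : set T) (f : T -> R) (b : R) :
  (forall x, E x -> 0 <= f x) -> (exists x0, E x0 /\ f x0 <= b) ->
  (forall x, E x -> f x <= b -> C x) ->
  inf (f @` E) = inf (f @` (E `&` C)).
Proof.
move=> f0 [x0 [Ex0 fx0]] EC.
have lbE : has_lbound (f @` E) by exists 0 => _ [x Ex <-]; exact: f0.
have lbEC : has_lbound (f @` (E `&` C)).
  by exists 0 => _ [x [Ex _] <-]; exact: f0.
apply/eqP; rewrite eq_le; apply/andP; split.
  apply: lb_le_inf; first by exists (f x0), x0 => //; split => //; exact: EC.
  by move=> _ [x [Ex Cx] <-]; apply: ge_inf => //; exists x.
apply: lb_le_inf; first by exists (f x0), x0.
move=> _ [x Ex <-].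
have [fxb|fxb] := leP (f x) b.
  by apply: ge_inf => //; exists x => //; split => //; exact: EC.
apply: (le_trans _ (ltW fxb)).
have Cx0 := EC x0 Ex0 fx0. apply: le_trans fx0; apply: ge_inf => //; exists x0 => //.
Qed.


Lemma key_ineq {R : realType} (a b c : R) : 0 < a -> 0 < c -> c * (b + 1) = a -> 0 <= b ->
  0 <= 0 - c * a - c * a + c * (c * b) -> False.
Proof. move=> *; nra. Qed.

Section LA.
Context {R : realType} {n : nat}.
Implicit Types (N B : 'M[R]_n) (u v w : 'rV[R]_n).

Definition bf N u v : R := (u *m N *m v^T) 0 0.
Definition nq u : R := (u *m u^T) 0 0.

Lemma bf_sym N u v : N^T = N -> bf N u v = bf N v u.
Proof.
move=> sN; rewrite /bf.
have -> : (u *m N *m v^T) 0 0 = ((u *m N *m v^T)^T) 0 0 by rewrite [RHS]mxE.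
by rewrite !trmx_mul trmxK sN mulmxA.
Qed.

Lemma bfDl N u v w : bf N (u + v) w = bf N u w + bf N v w.
Proof. by rewrite /bf !mulmxDl mxE. Qed.
Lemma bfDr N u v w : bf N w (u + v) = bf N w u + bf N w v.
Proof. by rewrite /bf linearD /= mulmxDr mxE. Qed.
Lemma bfZl N k u v : bf N (k *: u) v = k * bf N u v.
Proof. by rewrite /bf -!scalemxAl mxE. Qed.
Lemma bfZr N k u v : bf N u (k *: v) = k * bf N u v.
Proof. by rewrite /bf linearZ /= -scalemxAr mxE. Qed.
Lemma bfNr N u v : bf N u (- v) = - bf N u v.
Proof. by rewrite -scaleN1r bfZr mulN1r. Qed.
Lemma bfBl N u v w : bf N (u - v) w = bf N u w - bf N v w.
Proof. by rewrite bfDl -scaleN1r bfZl mulN1r. Qed.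
Lemma bfBr N u v w : bf N w (u - v) = bf N w u - bf N w v.
Proof. by rewrite bfDr bfNr. Qed.
Lemma bfBM N k u v : bf (N - k%:M) u v = bf N u v - k * (u *m v^T) 0 0.
Proof. by rewrite /bf mulmxBr mulmxBl mul_mx_scalar -scalemxAl !mxE. Qed.

Lemma nqE u : nq u = \sum_i u 0 i ^+ 2.
Proof. by rewrite /nq mxE; apply: eq_bigr => i _; rewrite mxE expr2. Qed.
Lemma nq_ge0 u : 0 <= nq u.
Proof. by rewrite nqE; apply: sumr_ge0 => i _; exact: sqr_ge0. Qed.
Lemma nq_eq0 u : nq u = 0 -> u = 0.
Proof.
rewrite nqE => /psumr_eq0P h; apply/rowP => i; rewrite mxE.
by apply/eqP; rewrite -sqrf_eq0; apply/eqP/h => // j _; exact: sqr_ge0.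
Qed.
Lemma nqZ k u : nq (k *: u) = k ^+ 2 * nq u.
Proof. by rewrite /nq linearZ /= -scalemxAr -scalemxAl !mxE mulrA expr2. Qed.

Lemma bfE N u : bf N u u = \sum_j \sum_i u 0 i * N i j * u 0 j.
Proof.
rewrite /bf mxE; apply: eq_bigr => j _. rewrite [u^T _ _]mxE. rewrite [(u *m N) _ _]mxE mulr_suml.
by [].
Qed.


Lemma bf0 N : bf N 0 0 = 0.
Proof. by rewrite -(scale0r (0 : 'rV[R]_n)) bfZl mul0r. Qed.

Lemma nq_cont : continuous (nq).
Proof.
have -> : nq = fun u => \sum_i u 0 i * u 0 i.
  by apply/funext => u; rewrite nqE; apply: eq_bigr => i _; rewrite expr2.
apply: (@continuous_big R _ +%R 0 xpredT add_continuous _ _ (fun i (u : 'rV[R]_n) => u 0 i * u 0 i)) => i _ u.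
have h1 := (@coord_continuous R 1 n 0 i u). have h2 := continuousM h1 h1. exact h2.
Qed.

Lemma bf_cont N : continuous (fun u => bf N u u).
Proof.
have -> : (fun u => bf N u u) = fun u => \sum_j \sum_i u 0 i * N i j * u 0 j.
  by apply/funext => u; rewrite bfE.
apply: (@continuous_big R _ +%R 0 xpredT add_continuous _ _ (fun j (u : 'rV[R]_n) => \sum_i u 0 i * N i j * u 0 j)) => j _.
apply: (@continuous_big R _ +%R 0 xpredT add_continuous _ _ (fun i (u : 'rV[R]_n) => u 0 i * N i j * u 0 j)) => i _ u.
have h1 := (@coord_continuous R 1 n 0 i u).
have h3 := (@coord_continuous R 1 n 0 j u).
have h0 : {for u, continuous (fun _ : 'rV[R]_n => N i j)} by exact: cst_continuous.
have h2 := continuousM (continuousM h1 h0) h3.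
exact h2.
Qed.


Lemma nq0 : nq (0 : 'rV[R]_n) = 0.
Proof. by rewrite -(scale0r (0 : 'rV[R]_n)) nqZ expr0n /= mul0r. Qed.

Lemma psd N : N^T = N -> (forall x, eigenvalue N x -> 0 <= x) ->
  forall u, 0 <= bf N u u.
Proof.
move=> sN eigN u1; rewrite leNgt; apply/negP => neg1.
have nq1 : 0 < nq u1.
  rewrite lt_neqAle nq_ge0 andbT eq_sym; apply/eqP => /nq_eq0 u10.
  by move: neg1; rewrite u10 bf0 ltxx.
pose S := [set u : 'rV[R]_n | nq u = 1].
have cS : compact S.
  apply: (@subclosed_compact _ _ [set v : 'rV[R]_n | forall i, `[(-1 : R), 1]%classic (v ord0 i)]).
  - have -> : S = nq @^-1` [set x | x = 1] by [].
    apply: preimage_closed; last exact: closed_eq.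
    by move=> x _; exact: nq_cont.
  - exact (@rV_compact R n (fun=> `[(-1 : R), 1]%classic) (fun=> @segment_compact R (-1) 1)).
  - move=> u /= Su i; rewrite in_itv /=.
    have : u 0 i ^+ 2 <= 1.
      rewrite -Su nqE (bigD1 i) //= lerDl.
      by apply: sumr_ge0 => j _; exact: sqr_ge0.
    move=> h; apply/andP; split; nra.
pose k1 := (Num.sqrt (nq u1))^-1.
have k1k1 : k1 ^+ 2 * nq u1 = 1.
  by rewrite /k1 exprVn sqr_sqrtr ?nq_ge0 // mulVf // gt_eqF.
have k1pos : 0 < k1 by rewrite /k1 invr_gt0 sqrtr_gt0.
have S0 : S !=set0.
  by exists (k1 *: u1); rewrite /S /= nqZ.
have [u0 u0S minu0] := compact_EVT_min S0 cS (continuous_subspaceT (@bf_cont N)).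
have nqu0 : nq u0 = 1 by move: u0S; rewrite inE.
pose mu := bf N u0 u0.
have muneg : mu < 0.
  have : mu <= bf N (k1 *: u1) (k1 *: u1).
    by apply: minu0; rewrite inE /S /= nqZ.
  rewrite bfZl bfZr => h.
  have : k1 * (k1 * bf N u1 u1) < 0 by nra.
  move=> h2; exact: le_lt_trans h h2.
have Hmu : forall v, mu * nq v <= bf N v v.
  move=> v; have [v0|vn0] := eqVneq (nq v) 0.
    by rewrite v0 mulr0 (nq_eq0 v0) bf0.
  have nqv : 0 < nq v by rewrite lt_neqAle eq_sym vn0 nq_ge0.
  pose k := (Num.sqrt (nq v))^-1.
  have kk : k * k * nq v = 1.
    by rewrite -expr2 /k exprVn sqr_sqrtr ?nq_ge0 // mulVf // gt_eqF.
  have : mu <= bf N (k *: v) (k *: v).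
    apply: minu0; rewrite inE /S /= nqZ.
    by rewrite expr2.
  rewrite bfZl bfZr => h.
  have := ler_wpM2r (ltW nqv) h.
  have -> : k * (k * bf N v v) * nq v = bf N v v.
    by rewrite mulrA mulrAC kk mul1r.
  by [].
pose B := N - mu%:M.
have sB : B^T = B by rewrite /B linearB /= tr_scalar_mx sN.
have qB : forall v, bf B v v = bf N v v - mu * nq v.
  by move=> v; rewrite /B bfBM.
have qB0 : forall v, 0 <= bf B v v.
  by move=> v; rewrite qB subr_ge0.
have qBu0 : bf B u0 u0 = 0 by rewrite qB nqu0 mulr1 subrr.
pose w := u0 *m B.
have cross : bf B u0 w = nq w by [].
have expand : forall t, bf B (u0 - t *: w) (u0 - t *: w) =
    bf B u0 u0 - t * bf B u0 w - t * bf B u0 w + t * (t * bf B w w).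
  move=> t; rewrite bfBl !bfBr !bfZl !bfZr (bf_sym u0 w sB).
  by rewrite opprD !addrA opprK.
have w0 : nq w = 0.
  apply/eqP; rewrite eq_le nq_ge0 andbT leNgt; apply/negP => wpos.
  pose q := bf B w w.
  have q0 : 0 <= q := qB0 w.
  pose t := nq w / (q + 1).
  have tq : t * (q + 1) = nq w by rewrite /t mulfVK // gt_eqF // ltr_wpDl.
  have tpos : 0 < t by rewrite /t divr_gt0 // ltr_wpDl.
  have := qB0 (u0 - t *: w).
  rewrite expand qBu0 cross -/q => h.
  by have := key_ineq wpos tpos tq q0 h.
have wz : w = 0 := nq_eq0 w0.
have eig : eigenvalue N mu.
  apply/eigenvalueP; exists u0.
    apply/eqP; rewrite -subr_eq0 -mul_mx_scalar -mulmxBr.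
    by apply/eqP; exact: wz.
  by apply/eqP => u00; move: nqu0; rewrite u00 nq0 => /eqP; rewrite eq_sym oner_eq0.
by have := eigN _ eig; rewrite leNgt muneg.
Qed.

End LA.

Lemma entry_le_norm {R : realType} (r : nat) (s : 'cV[R]_r) i : `|s i 0| <= `|s|.
Proof.
rewrite [leRHS]/Num.norm /= mx_normrE; apply/bigmax_geP; right => /=.
by exists (i, 0).
Qed.

Lemma coercive {R : realType} (r : nat) (M : 'M[R]_r) (c : R) :
  M^T = M -> (forall x, eigenvalue M x -> c <= x) ->
  forall v : 'cV[R]_r, c * \sum_i (v i 0) ^+ 2 <= qform M v.
Proof.
move=> sM eigM v.
pose N := M - c%:M.
have sN : N^T = N by rewrite /N linearB /= tr_scalar_mx sM.
have eigN : forall x, eigenvalue N x -> 0 <= x.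
  move=> x /eigenvalueP [u uN un0].
  have : eigenvalue M (x + c).
    apply/eigenvalueP; exists u => //.
    move: uN; rewrite /N mulmxBr mul_mx_scalar => /eqP; rewrite subr_eq => /eqP ->.
    by rewrite scalerDl.
  by move/eigM; rewrite lerDr.
have := psd sN eigN v^T.
rewrite bfBM subr_ge0.
have -> : bf M v^T v^T = qform M v by rewrite /bf /qform trmxK.
have -> : (v^T *m v^T^T) 0 0 = \sum_i v i 0 ^+ 2.
  by rewrite trmxK mxE; apply: eq_bigr => i _; rewrite !mxE expr2.
by [].
Qed.

Section Arith.
Context {R : realType}.
Lemma AL1 (x y : R) : `|x| <= y -> x ^+ 2 <= y ^+ 2.
Proof. move=> h; rewrite -(real_normK (num_real x)); have := normr_ge0 x; nra. Qed.
Lemma AL2 (x y : R) : 0 <= y -> x ^+ 2 < y ^+ 2 -> `|x| < y.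
Proof. rewrite -(real_normK (num_real x)) => y0 h; have := normr_ge0 x; nra. Qed.
Lemma AL3 (c z s : R) : 2 * c * (z * s) <= c ^+ 2 * z ^+ 2 + s ^+ 2.
Proof. have := sqr_ge0 (c * z - s); nra. Qed.
Lemma AL4 (c Q P Ssq W : R) : 0 < c -> 0 <= Q -> c * Q <= P ->
  2 * c * P <= c ^+ 2 * Q + Ssq -> Ssq <= W -> c * P <= W /\ c ^+ 2 * Q <= W.
Proof. move=> *; split; nra. Qed.
Lemma AL5 (c D b W dsq zsq Q l : R) : 0 < c -> c * D <= b -> c * b = W ->
  dsq <= D -> zsq <= Q -> c ^+ 2 * Q <= W -> l ^+ 2 <= 2 * dsq + 2 * zsq ->
  c ^+ 2 * l ^+ 2 <= 4 * W.
Proof. move=> *; nra. Qed.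
Lemma AL6 (c W L K2 : R) : 0 < c -> c ^+ 2 * L <= 4 * W -> 4 * W < c ^+ 2 * K2 -> L < K2.
Proof. move=> *; nra. Qed.
Lemma AL7 (a b : R) : a ^+ 2 <= 2 * ((a - b) ^+ 2) + 2 * (b ^+ 2).
Proof. have := sqr_ge0 (a - 2 * b); nra. Qed.
End Arith.

Lemma term_le_sum {R : realType} (r : nat) (F : 'I_r -> R) i :
  (forall j, 0 <= F j) -> F i <= \sum_j F j.
Proof.
move=> F0; rewrite (bigD1 i) //= lerDl.
by apply: sumr_ge0 => j _.
Qed.

Lemma det_main {R : realType} (r : nat) (M : 'M[R]_r) (c M0 delta : R)
  (Th Lam : set 'cV[R]_r) (T : nat) (s : 'cV[R]_r) :
  M^T = M -> 0 < c -> (forall x, eigenvalue M x -> c <= x) -> 0 < delta ->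
  Th 0 -> is_cone Lam -> Th `&` cube delta = Lam `&` cube delta ->
  `|s| <= M0 -> 4 * (r%:R * M0 ^+ 2) < c ^+ 2 * (T%:R * delta ^+ 2) ->
  inf_qform M (invmx M *m s) (scaled_set Th T) = inf_qform M (invmx M *m s) Lam.
Proof.
move=> sM c0 eigM d0 Th0 cone loc sM0 HT.
set Z := invmx M *m s.
set W := r%:R * M0 ^+ 2.
have W0 : 0 <= W by rewrite mulr_ge0 // sqr_ge0.
have coer := coercive sM eigM.
have unitM : M \in unitmx.
  rewrite -row_free_unit -kermx_eq0.
  have : ~~ eigenvalue M 0 by apply/negP => /eigM; rewrite leNgt c0.
  rewrite /eigenvalue /eigenspace negbK.
  have -> : (0 : R)%:M = (0 : 'M[R]_r) by apply/matrixP => i j; rewrite !mxE mul0rn.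
  by rewrite subr0.
have MZ : M *m Z = s by rewrite /Z mulKVmx.
pose Q := \sum_i Z i 0 ^+ 2.
pose P := \sum_i Z i 0 * s i 0.
pose Ssq := \sum_i s i 0 ^+ 2.
have qZ : qform M Z = P.
  rewrite /qform -mulmxA MZ mxE; apply: eq_bigr => i _; rewrite mxE //.
have cQP : c * Q <= P by rewrite -qZ; exact: coer.
have Q0 : 0 <= Q by apply: sumr_ge0 => i _; exact: sqr_ge0.
have H2 : 2 * c * P <= c ^+ 2 * Q + Ssq.
  rewrite /P /Q /Ssq mulr_sumr mulr_sumr -big_split /=.
  by apply: ler_sum => i _; exact: AL3.
have HS : Ssq <= W.
  apply: (@le_trans _ _ (\sum_(i < r) M0 ^+ 2)).
    by apply: ler_sum => i _; apply: AL1; exact: le_trans (entry_le_norm s i) sM0.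
  by rewrite sumr_const card_ord -mulr_natl.
have [cPW cQW] := AL4 c0 Q0 cQP H2 HS.
pose f := fun l : 'cV[R]_r => qform M (l - Z).
pose b := W / c.
have cb : c * b = W by rewrite /b mulrC divfK // gt_eqF.
have f0 : forall l, 0 <= f l.
  move=> l; apply: le_trans (coer (l - Z)).
  by apply: mulr_ge0; [exact: ltW | apply: sumr_ge0 => i _; exact: sqr_ge0].
have fZ : f 0 <= b.
  rewrite /f sub0r.
  have -> : qform M (- Z) = qform M Z.
    rewrite /qform -scaleN1r linearZ /= mxE [(-1 *: Z)^T]linearZ /= -!scalemxAl mxE.
    by rewrite !mulN1r opprK.
  rewrite qZ -(ler_pM2l c0) cb //.
have T0 : (0 < T)%N.
  rewrite lt0n; apply/negP => /eqP T0; move: HT; rewrite T0 mul0r mulr0.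
  by rewrite ltNge mulr_ge0.
set K := Num.sqrt (T%:R : R).
have K0 : 0 < K by rewrite sqrtr_gt0 ltr0n.
have KK : K ^+ 2 = T%:R by rewrite sqr_sqrtr // ler0n.
pose C := @cube R r (K * delta).
have inC : forall l, f l <= b -> C l.
  move=> l fl i.
  apply: AL2; first by rewrite mulr_ge0 // ltW.
  apply: (AL6 c0 _ (_ : 4 * W < c ^+ 2 * ((K * delta) ^+ 2))); last by rewrite exprMn KK.
  have h1 : c * (\sum_j (l - Z) j 0 ^+ 2) <= b by apply: le_trans (coer (l - Z)) _; exact: fl.
  have h2 := @term_le_sum R r (fun j => (l - Z) j 0 ^+ 2) i (fun j => sqr_ge0 _).
  have h3 := @term_le_sum R r (fun j => Z j 0 ^+ 2) i (fun j => sqr_ge0 _).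
  have h4 : l i 0 ^+ 2 <= 2 * ((l - Z) i 0 ^+ 2) + 2 * (Z i 0 ^+ 2).
    by rewrite !mxE; exact: AL7.
  exact: (AL5 c0 h1 cb h2 h3 cQW h4).
have Lam0 : Lam 0.
  have : (Th `&` cube delta) 0 by split => // i; rewrite mxE normr0.
  by rewrite loc => -[].
have Sc0 : scaled_set Th T 0 by exists 0 => //; rewrite scaler0.
have eqC : scaled_set Th T `&` C = Lam `&` C.
  apply/seteqP; split => l [Hl Cl].
    case: Hl Cl => th Thth <- Cl; split => //.
    have : (Th `&` cube delta) th.
      split => // i; have := Cl i; rewrite mxE normrM (gtr0_norm K0).
      by rewrite ltr_pM2l.
    rewrite loc => -[Lth _]; exact: cone.
  split => //.
  have Lth : Lam (K^-1 *: l) by apply: cone => //; rewrite invr_gt0.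
  have : (Lam `&` cube delta) (K^-1 *: l).
    split => // i; have := Cl i; rewrite mxE normrM (gtr0_norm (_ : 0 < K^-1)) ?invr_gt0 //.
    by rewrite ltr_pdivrMl.
  rewrite -loc => -[Thth _]; exists (K^-1 *: l) => //.
  by rewrite scalerA mulfV ?gt_eqF // scale1r.
rewrite /inf_qform -/f.
rewrite (@inf_restrict R _ (scaled_set Th T) C f b (fun l _ => f0 l) (ex_intro _ 0 (conj Sc0 fZ)) (fun l _ => inC l)).
rewrite (@inf_restrict R _ Lam C f b (fun l _ => f0 l) (ex_intro _ 0 (conj Lam0 fZ)) (fun l _ => inC l)).
by rewrite eqC.
Qed.

Unset Implicit Arguments.
Set Strict Implicit.

Theorem lemma3 (R : realType) (d : measure_display) (Om : measurableType d)
  (P : probability Om R) (a r : nat) (A : set 'rV[R]_a)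
  (S : nat -> Om -> 'rV[R]_a -> 'cV[R]_r) (I : 'rV[R]_a -> 'M[R]_r)
  (Theta : 'rV[R]_a -> set 'cV[R]_r) (Lambda : set 'cV[R]_r) :
  compact A ->
  (forall T w, {within A, continuous (S T w)}) ->
  O_p_unif P A (scaled_score S) ->
  (forall alpha, A alpha -> (I alpha)^T = I alpha) ->
  {within A, continuous I} ->
  (exists c C : R, 0 < c /\
     forall alpha, A alpha -> forall x, eigenvalue (I alpha) x -> c <= x <= C) ->
  (forall alpha, A alpha -> Theta alpha 0) ->
  is_cone Lambda ->
  loc_unif_equal A Theta Lambda ->
  o_p_unif P A (fun T w alpha =>
    inf_qform (I alpha) (Zstat S I T w alpha) (scaled_set (Theta alpha) T)
    - inf_qform (I alpha) (Zstat S I T w alpha) Lambda).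
Proof.
move=> _ _ Op sym _ [c [C [c0 Heig]]] Th0 cone [delta [d0 loc]] eps eta eps0 eta0.
have [M0 HM0] := Op eta eta0.
pose W := r%:R * M0 ^+ 2.
have q0 : 0 < c ^+ 2 * delta ^+ 2 by rewrite mulr_gt0 // exprn_gt0.
have HT := nbhs_infty_ger (4 * W / (c ^+ 2 * delta ^+ 2) + 1).
move: HM0 HT; apply: filterS2 => T [F [mF [EF PF]]] HTb.
exists F; split => //; split => //.
move=> w [alpha [Aa He]]; apply: EF; exists alpha; split => //.
rewrite ltNge; apply/negP => hs.
have HT' : 4 * W < c ^+ 2 * (T%:R * delta ^+ 2).
  have : 4 * W / (c ^+ 2 * delta ^+ 2) < T%:R.
    by apply: lt_le_trans HTb; rewrite ltrDl.
  rewrite ltr_pdivrMr // => h; move: h.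
  by rewrite [c ^+ 2 * (_ * _)]mulrCA.
move: He; rewrite /Zstat.
rewrite (@det_main R r (I alpha) c M0 delta (Theta alpha) Lambda T _ (sym _ Aa) c0
  (fun x h => proj1 (andP (Heig _ Aa x h))) d0 (Th0 _ Aa) cone (loc _ Aa) hs HT').
by rewrite subrr normr0 ltNge ltW.
Qed.
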